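(* Let $\theta:[0,1]\to[0,\infty]$ and $\vartheta:[0,\infty]\to[0,1]$ be continuous and decreasing functions, and suppose that the function $O_{\theta,\vartheta}:[0,1]^2\to[0,1]$, $O_{\theta,\vartheta}(x,y)=\vartheta(\theta(x)+\theta(y))$, is an overlap function. Then: (i) $\theta(x)=\infty$ if and only if $x=0$; (ii) $\vartheta(x)=0$ if and only if $x=\infty$.
   Context: ''Decreasing'' means non-increasing and ''increasing'' means non-decreasing. Arithmetic in $[0,\infty]$ uses $c+\infty=\infty+c=\infty$; continuity on $[0,\infty]$ refers to the usual topology of the extended half-line. An overlap function is a map $O:[0,1]^2\to[0,1]$ that is (O1) commutative, (O2) $O(x,y)=0$ iff $xy=0$, (O3) $O(x,y)=1$ iff $xy=1$, (O4) increasing in each variable, (O5) continuous. If $O_{\theta,\vartheta}$ is an overlap function, $(\theta,\vartheta)$ is called an additive generator pair of it. *)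

(* Defs.v *)
From mathcomp Require Import all_boot all_order all_algebra.
From mathcomp Require Import all_classical all_reals all_analysis.
Set Implicit Arguments. Unset Strict Implicit. Unset Printing Implicit Defensive.
Import Order.TTheory GRing.Theory Num.Theory.
Import numFieldNormedType.Exports.
Local Open Scope classical_set_scope.
Local Open Scope ring_scope.

Definition unitI (R : realType) : set R := `[0, 1]%classic.

Definition ehalf (R : realType) : set (\bar R) := [set x | (0 <= x)%E].
Arguments unitI R : clear implicits.
Arguments ehalf R : clear implicits.

(* Overlap function O : [0,1]^2 -> [0,1] (values of O outside [0,1]^2 are
   irrelevant). *)
Definition overlap (R : realType) (O : R -> R -> R) : Prop :=
  (forall x y, x \in unitI R -> y \in unitI R -> O x y \in unitI R) /\
  (forall x y, x \in unitI R -> y \in unitI R -> O x y = O y x) /\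
  (forall x y, x \in unitI R -> y \in unitI R ->
                (O x y = 0 <-> x * y = 0)) /\
  (forall x y, x \in unitI R -> y \in unitI R ->
                (O x y = 1 <-> x * y = 1)) /\
  (forall x y z, x \in unitI R -> y \in unitI R -> z \in unitI R ->
                y <= z -> O x y <= O x z /\ O y x <= O z x) /\
  {within (unitI R `*` unitI R : set (R * R)%type),
               continuous (fun p : (R * R)%type => O p.1 p.2)}.

Definition O_gen (R : realType) (theta : R -> \bar R) (vtheta : \bar R -> R)
  : R -> R -> R := fun x y => vtheta (theta x + theta y)%E.

(* Main.v *)
Require Import Defs.
From mathcomp Require Import all_boot all_order all_algebra.
From mathcomp Require Import all_classical all_reals all_analysis.
From mathcomp Require Import lra.
Import Order.TTheory GRing.Theory Num.Theory.
Import numFieldNormedType.Exports.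
Local Open Scope classical_set_scope.
Local Open Scope ring_scope.
Lemma inI (R : realType) (x : R) : (x \in unitI R) = (0 <= x <= 1).
Proof. by rewrite /unitI; apply/idP/idP; rewrite in_setE /= in_itv //. Qed.
Lemma inH (R : realType) (u : \bar R) : (u \in ehalf R) = (0 <= u)%E.
Proof. by by rewrite /ehalf; apply/idP/idP; rewrite in_setE. Qed.
Lemma key (R : realType) (theta : R -> \bar R) (c : R) :
  {within unitI R, continuous theta} -> (c%:E < theta 0%R)%E ->
  exists x : R, 0 < x <= 1 /\ (c%:E < theta x)%E.
Proof.
move=> Ct Hc.
have A0 : unitI R 0 by rewrite /unitI /= in_itv /= lexx ler01.
have := Ct 0 _ (open_ereal_gt' Hc).
rewrite /nbhs /= -(nbhs_subspace_in A0) /=.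
move=> [e /= e0 He].
exists (Num.min (e/2) 1); split.
  by rewrite lt_min ltr01 divr_gt0 //= ge_min lexx orbT.
apply: He.
  rewrite /ball /= sub0r normrN gtr0_norm ?lt_min ?ltr01 ?divr_gt0 //.
  by rewrite gt_min ltr_pdivrMr // ltr_pMr // ltr1n.
rewrite /unitI /= in_itv /= ge_min lexx orbT andbT.
by rewrite le_min ler01 divr_ge0 // ltW.
Qed.

Theorem theorem3p1 (R : realType) (theta : R -> \bar R) (vtheta : \bar R -> R) :
  (* theta : [0,1] -> [0,oo] *)
  (forall x, x \in unitI R -> theta x \in ehalf R) ->
  (* vartheta : [0,oo] -> [0,1] *)
  (forall u, u \in ehalf R -> vtheta u \in unitI R) ->
  {within unitI R, continuous theta} ->
  {within ehalf R, continuous vtheta} ->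
  (* decreasing = non-increasing *)
  (forall x y, x \in unitI R -> y \in unitI R -> x <= y -> (theta y <= theta x)%E) ->
  (forall u v, u \in ehalf R -> v \in ehalf R -> (u <= v)%E -> vtheta v <= vtheta u) ->
  overlap (O_gen theta vtheta) ->
  (forall x, x \in unitI R -> (theta x = +oo%E <-> x = 0)) /\
  (forall u, u \in ehalf R -> (vtheta u = 0 <-> u = +oo%E)).
Proof.
move=> Hth Hvt Cth _ Dth Dvt [_ [_ [H2 [H3 _]]]].
have I0 : (0:R) \in unitI R by rewrite inI lexx ler01.
have I1 : (1:R) \in unitI R by rewrite inI lexx ler01.
have th0 x : x \in unitI R -> (0 <= theta x)%E by move=> /Hth; rewrite inH.
have vt0 u : (0 <= u)%E -> 0 <= vtheta u by move=> h; have := Hvt u; rewrite inH inI => /(_ h) /andP[].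
have O00 : vtheta (theta 0%R + theta 0%R)%E = 0 by apply/(H2 0 0 I0 I0); rewrite mulr0.
have O01 : vtheta (theta 0%R + theta 1%R)%E = 0 by apply/(H2 0 1 I0 I1); rewrite mul0r.
have O11 : vtheta (theta 1%R + theta 1%R)%E = 1 by apply/(H3 1 1 I1 I1); rewrite mulr1.
have Oxx x : 0 < x <= 1 -> vtheta (theta x + theta x)%E <> 0.
  move=> /andP[x0 x1] /(H2 x x); rewrite !inI x1 ltW //= => /(_ isT isT).
  by move/eqP; rewrite mulf_eq0 orbb gt_eqF.
have Ox1 x : 0 < x <= 1 -> vtheta (theta x + theta 1%R)%E <> 0.
  move=> /andP[x0 x1] /(H2 x 1); rewrite !inI x1 ltW //= lexx ler01 => /(_ isT isT).
  by move/eqP; rewrite mulr1 gt_eqF.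
have thinf : theta 0%R = +oo%E.
  have := th0 0 I0; have := th0 1 I1.
  have D10 := Dth 0 1 I0 I1 ler01.
  move: D10.
  case E0: (theta 0%R) => [a| |] //; case E1: (theta 1%R) => [b| |] //.
  rewrite !lee_fin => ba a0 b0.
  exfalso.
  have [ab|ab] := eqVneq a b.
    by move: O00 O11; rewrite E0 E1 ab => ->; apply/eqP; rewrite eq_sym oner_eq0.
  have ba' : b < a by rewrite lt_def ab ba.
  have Hc : (((a + b) / 2)%:E < theta 0%R)%E by rewrite E0 lte_fin; lra.
  have [x [/andP[x0 x1] Hx]] := @key _ _ _ Cth Hc.
  have Ix : x \in unitI R by rewrite inI ltW.
  have := Dth 0 x I0 Ix (ltW x0); rewrite E0.
  move: Hx; case Ex: (theta x) => [t| |] //; rewrite !lte_fin lee_fin => ct ta.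
  apply: (Oxx x); first by rewrite x0 x1.
  apply/eqP; rewrite eq_le vt0 ?andbT; last by rewrite Ex -EFinD lee_fin; lra.
  rewrite -O01 E0 E1 Ex; apply: Dvt; rewrite ?inH -?EFinD ?lee_fin; lra.
have Ith x : 0 < x <= 1 -> x \in unitI R by move=> /andP[x0 x1]; rewrite inI ltW.
split.
- move=> x Ix; split; last by move=> ->.
  move=> Hx; apply/eqP; apply/negPn/negP => xn0.
  have x0 : 0 < x by move: Ix; rewrite inI lt_def xn0 => /andP[-> _].
  apply: (Oxx x); first by move: Ix; rewrite inI x0 => /andP[_ ->].
  by rewrite Hx -O00 thinf.
- move=> u Iu; split; last by move=> ->; rewrite -O00 thinf.
  move=> Hu; move: Iu; rewrite inH; case Eu: u => [r| |] // r0; exfalso.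
  have Hc : (r%:E < theta 0%R)%E by rewrite thinf ltry.
  have [x [/andP[x0 x1] Hx]] := @key _ _ _ Cth Hc.
  have Ix : x \in unitI R by apply: Ith; rewrite x0 x1.
  apply: (Ox1 x); first by rewrite x0 x1.
  apply/eqP; rewrite eq_le vt0 ?andbT; last by rewrite adde_ge0 ?th0.
  rewrite -Hu Eu; apply: Dvt; rewrite ?inH ?adde_ge0 ?th0 //.
  by apply: le_trans (ltW Hx) (leeDl _ (th0 _ I1)).
Qed.
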